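(* Suppose that a string $S$ with $|S| \le |Q_k|+4\tau$ contains $Q_k$ as a substring. Then (a) replacing any occurrence of $Q_k$ in $S$ with $Q_k'$ results in $r_k(S)$; (b) replacing any occurrence of $Q'_k$ in $r_k(S)$ with $Q_k$ results in $S$.
   Context: For a string $S$, $S[1..p]$ is a period of $S$ if $S[i]=S[i+p]$ for $1\le i\le |S|-p$, and $\mathrm{per}(S)$ denotes the length of the shortest period of $S$. Let $\tau\ge1$ and $\ell>10\tau$ be integers, $S_k$ a string of length at least $\ell$, and $Q_k = S_k[1+2\tau..\ell]$, so $|Q_k|=\ell-2\tau\ge 8\tau$. Let $\rho=Q_k[1..\mathrm{per}(Q_k)]$. If $\mathrm{per}(Q_k) > 4\tau$, define $Q_k' = \#$, where $\#$ is a special letter not in the main alphabet. Otherwise write $Q_k=\rho^t\rho'$ with $\rho'$ a prefix of $\rho$, and set $Q_k'=\rho^{t'}\rho'$ for some $t'\le t$ chosen so that $8\tau\le |Q_k'|<12\tau$. For any string $S$, define $r_k(S)=\varepsilon$ (the empty string) if $S$ does not contain $Q_k$, and otherwise $r_k(S)$ is the string obtained from $S$ by replacing the first occurrence of $Q_k$ with $Q'_k$. *)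

(* Defs.v *)
From mathcomp Require Import all_boot.
Set Implicit Arguments. Unset Strict Implicit. Unset Printing Implicit Defensive.

(* Strings that may contain the
   special letter # (not in A) are [seq (option A)], with # = None and the
   main letters embedded by Some.  Positions are 0-indexed internally. *)

Section Strings.
Variable A : eqType.

Definition is_period (S : seq A) (p : nat) : bool :=
  [&& 0 < p, p <= size S &
      all (fun i => onth S i == onth S (i + p)) (iota 0 (size S - p))].

(* length of the shortest period (defaults to |S|+1 only if S is empty) *)
Definition per (S : seq A) : nat :=
  head (size S).+1 [seq p <- iota 1 (size S) | is_period S p].

(* Q_k = S_k[1+2tau .. l] (1-indexed, inclusive) *)
Definition Qk (tau l : nat) (Sk : seq A) : seq A := drop (2 * tau) (take l Sk).

(* Q'_k is any string satisfying the paper's specification (the choice of t'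
   is free, subject to 8 tau <= |Q'_k| < 12 tau). *)
Definition Qprime_spec (tau : nat) (Q : seq A) (Q' : seq (option A)) : Prop :=
  (4 * tau < per Q /\ Q' = [:: None]) \/
  (per Q <= 4 * tau /\
   exists (t t' : nat) (rho' : seq A),
     let rho := take (per Q) Q in
     [/\ Q = flatten (nseq t rho) ++ rho', prefix rho' rho, t' <= t,
         Q' = map Some (flatten (nseq t' rho) ++ rho') &
         8 * tau <= size Q' < 12 * tau]).

(* r_k(S): empty if S does not contain Q, else replace first occurrence of Q by Q' *)
Definition rk (Q : seq A) (Q' : seq (option A)) (S : seq A) : seq (option A) :=
  if infix Q S then
    let i := infix_index Q S in
    map Some (take i S) ++ Q' ++ map Some (drop (i + size Q) S)
  else [::].

End Strings.

(* Main.v *)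
Require Import Defs.
From mathcomp Require Import all_boot.
From mathcomp Require Import zify.
Set Implicit Arguments. Unset Strict Implicit. Unset Printing Implicit Defensive.

Section Aux.
Variables (A : eqType) (x0 : A).

Definition perP (X : seq A) (q : nat) :=
  forall i, i + q < size X -> nth x0 X i = nth x0 X (i + q).

Lemma onth_some (s : seq A) i : i < size s -> onth s i = Some (nth x0 s i).
Proof. by move=> h; rewrite onthE (nth_map x0). Qed.

Lemma perP_is (X : seq A) q : 0 < q -> q <= size X -> perP X q -> is_period X q.
Proof.
move=> q0 qX hP; rewrite /is_period q0 qX /=; apply/allP => i.
rewrite mem_iota add0n => /andP[_ hi].
have h1 : i + q < size X by lia.
rewrite !onth_some //; last by lia.
by rewrite hP.
Qed.

Lemma is_perP (X : seq A) q : is_period X q -> perP X q.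
Proof.
move=> /and3P[q0 qX /allP hall] i hi.
have := hall i; rewrite mem_iota add0n.
have -> : i < size X - q by lia.
move=> /(_ isT) /eqP; rewrite !onth_some //; last by lia.
by case.
Qed.

Lemma head_filter_iota (P : pred nat) d n k q :
  q \in [seq p <- iota n k | P p] -> head d [seq p <- iota n k | P p] <= q.
Proof.
elim: k n => [|k IH] n //=.
case: ifP => Pn.
  rewrite inE => /orP[/eqP->//|]; rewrite mem_filter mem_iota => /andP[_ /andP[h _]].
  rewrite /=; lia.
by move=> /IH.
Qed.

Lemma head_filter_iota_mem (P : pred nat) d n k :
  has P (iota n k) ->
  let h := head d [seq p <- iota n k | P p] in P h && (n <= h < n + k).
Proof.
elim: k n => [|k IH] n //=.
case: ifP => Pn /=.
  by move=> _; rewrite Pn /=; lia.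
move=> /IH /andP[-> h] /=; lia.
Qed.

Lemma per_min (X : seq A) q : 0 < q -> q <= size X -> perP X q -> per X <= q.
Proof.
move=> q0 qX hP; rewrite /per.
apply: head_filter_iota; rewrite mem_filter mem_iota perP_is //; lia.
Qed.

Lemma per_prop (X : seq A) : 0 < size X -> [/\ 0 < per X, per X <= size X & perP X (per X)].
Proof.
move=> hX.
have hh : has (is_period X) (iota 1 (size X)).
  apply/hasP; exists (size X); first by rewrite mem_iota; lia.
  by rewrite /is_period hX leqnn subnn.
have /andP[h1 h2] := head_filter_iota_mem (size X).+1 hh.
rewrite /per.
split; [lia|lia|exact: is_perP].
Qed.

Lemma perP_mul (X : seq A) p k a : perP X p -> a + k * p < size X ->
  nth x0 X a = nth x0 X (a + k * p).
Proof.
move=> hP; elim: k => [|k IH] h; first by rewrite addn0.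
rewrite IH; last by lia.
rewrite hP; last by lia.
congr nth; lia.
Qed.

Lemma fine_wilf (X : seq A) p q : 0 < p -> 0 < q -> p + q <= size X ->
  perP X p -> perP X q -> perP X (gcdn p q).
Proof.
move=> hp hq; move: {2}(p + q) (leqnn (p + q)) => N.
elim: N p q hp hq => [|N IH] p q hp hq hN hS Pp Pq; first by lia.
case: (ltngtP p q) => hpq.
- have Pd : perP X (q - p).
    move=> i hi.
    case: (ltnP (i + q) (size X)) => hiq.
      rewrite Pq // [in RHS]Pp; last by lia.
      congr nth; lia.
    have -> : i = (i - p) + p by lia.
    rewrite -Pp; last by lia.
    rewrite Pq; last by lia.
    congr nth; lia.
  have := IH p (q - p) hp ltac:(lia) ltac:(lia) ltac:(lia) Pp Pd.
  by have := gcdnDr p (q - p); rewrite subnK ?(ltnW hpq) // => ->.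
- have Pd : perP X (p - q).
    move=> i hi.
    case: (ltnP (i + p) (size X)) => hiq.
      rewrite Pp // [in RHS]Pq; last by lia.
      congr nth; lia.
    have -> : i = (i - q) + q by lia.
    rewrite -Pq; last by lia.
    rewrite Pp; last by lia.
    congr nth; lia.
  have := IH (p - q) q ltac:(lia) hq ltac:(lia) ltac:(lia) Pd Pq.
  by rewrite gcdnC; have := gcdnDr q (p - q); rewrite subnK ?(ltnW hpq) // gcdnC => ->.
- by rewrite hpq gcdnn.
Qed.

Lemma per_dvd (Q X z : seq A) d : Q = X ++ z -> 0 < d -> per Q + d <= size X ->
  perP X d -> per Q %| d.
Proof.
move=> hQ d0 hs Pd.
have sQ : size Q = size X + size z by rewrite hQ size_cat.
have [p0 pQ Pp] := per_prop (X := Q) ltac:(lia).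
set p := per Q in p0 pQ Pp hs *.
have PXp : perP X p.
  move=> i hi; have := Pp i ltac:(lia); rewrite hQ !nth_cat.
  have -> : i < size X by lia.
  by rewrite hi.
set g := gcdn p d.
have PXg : perP X g by apply: fine_wilf => //; lia.
have g0 : 0 < g by rewrite gcdn_gt0 p0.
have gp : g <= p by apply: dvdn_leq => //; apply: dvdn_gcdl.
have gd : g <= d by apply: dvdn_leq => //; apply: dvdn_gcdr.
have PQg : perP Q g.
  move=> i hi.
  have hi' : i = i %% p + i %/ p * p by rewrite addnC -divn_eq.
  have ha : i %% p < p by rewrite ltn_mod.
  rewrite hi' -(perP_mul (a := i %% p) Pp); last by lia.
  have -> : i %% p + i %/ p * p + g = (i %% p + g) + i %/ p * p by lia.
  rewrite -(perP_mul (a := i %% p + g) Pp); last by lia.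
  have := PXg (i %% p) ltac:(lia).
  rewrite hQ !nth_cat.
  have -> : i %% p < size X by lia.
  by have -> : i %% p + g < size X by lia.
have : p <= g by apply: per_min => //; lia.
move=> pg; have gE : g = p by lia.
by rewrite -gE dvdn_gcdr.
Qed.

Lemma occ_per (X x y u v : seq A) : x ++ X ++ y = u ++ X ++ v -> size x <= size u ->
  perP X (size u - size x).
Proof.
move=> E hxu i hi.
have h1 : nth x0 (x ++ X ++ y) (size x + (i + (size u - size x))) = nth x0 X (i + (size u - size x)).
  by rewrite nth_cat ltnNge leq_addr /= addKn nth_cat hi.
have h2 : nth x0 (u ++ X ++ v) (size u + i) = nth x0 X i.
  by rewrite nth_cat ltnNge leq_addr /= addKn nth_cat; have -> : i < size X by lia.
have e : size x + (i + (size u - size x)) = size u + i by lia.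
by rewrite -h1 -h2 E e.
Qed.

Lemma occ_eq (X x y u v : seq A) : x ++ X ++ y = u ++ X ++ v -> size x = size u ->
  x = u /\ y = v.
Proof.
move=> E hs; move/eqP: E; rewrite eqseq_cat // => /andP[/eqP -> /eqP].
by move/eqP; rewrite eqseq_cat // => /andP[_ /eqP ->].
Qed.

Lemma catL (s a b : seq A) : s ++ a = s ++ b -> a = b.
Proof. by elim: s => //= c s IH [] /IH. Qed.

Lemma cat_split (x s u t : seq A) : x ++ s = u ++ t -> size x <= size u ->
  exists w, u = x ++ w /\ s = w ++ t.
Proof.
elim: x u => [|c x IH] u /=; first by move=> ->; exists u.
case: u => [|c' u] //= [-> E] h.
by have [w [-> ->]] := IH u E h; exists w.
Qed.

Lemma flat_size (r : seq A) k : size (flatten (nseq k r)) = k * size r.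
Proof. by elim: k => //= k IH; rewrite size_cat IH mulSn. Qed.

Lemma flat_add (r : seq A) a b :
  flatten (nseq (a + b) r) = flatten (nseq a r) ++ flatten (nseq b r).
Proof. by rewrite nseqD flatten_cat. Qed.

Lemma swap_le (r r' x y u v : seq A) a b k :
  size u - size x = k * size r -> size x <= size u -> k <= a ->
  x ++ (flatten (nseq a r) ++ r') ++ y = u ++ (flatten (nseq a r) ++ r') ++ v ->
  x ++ (flatten (nseq b r) ++ r') ++ y = u ++ (flatten (nseq b r) ++ r') ++ v.
Proof.
move=> hs hxu hk E.
have [w [hu hw]] := cat_split E hxu.
have sw : size w = k * size r by move: hs; rewrite hu size_cat; lia.
have ak : a = k + (a - k) by lia.
have wE : w = flatten (nseq k r).
  have := congr1 (take (size w)) hw.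
  rewrite [in RHS]take_size_cat // ak flat_add -!catA take_size_cat ?flat_size //.
rewrite hu {hu hs} wE in hw *.
move: hw; rewrite {1}ak flat_add -!catA => /catL.
have ak' : a = (a - k) + k by lia.
rewrite [flatten (nseq a r)](_ : _ = flatten (nseq (a - k) r) ++ flatten (nseq k r));
  last by rewrite -flat_add -ak'.
rewrite -!catA => /catL E2.
by rewrite E2; congr (x ++ _); rewrite catA -flat_add addnC flat_add -catA.
Qed.
End Aux.

Lemma none_notin (A : eqType) (s : seq A) : None \notin map Some s.
Proof. by elim: s. Qed.

Lemma split_none (A : eqType) (a u b v : seq (option A)) :
  None \notin a -> None \notin u -> a ++ None :: b = u ++ None :: v -> a = u /\ b = v.
Proof.
elim: a u => [|c a IH] [|c' u] /=.
- by move=> _ _ [->].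
- by move=> _; rewrite inE negb_or => /andP[/eqP hc _] [hc2 _]; rewrite hc2 in hc.
- by rewrite inE negb_or => /andP[/eqP hc _] _ [hc2 _]; rewrite hc2 in hc.
- rewrite !inE !negb_or => /andP[hc ha] /andP[hc' hu] [-> E].
  by have [-> ->] := IH u ha hu E.
Qed.

Lemma map_cat3 (A : eqType) (W M : seq A) (u v : seq (option A)) :
  map Some W = u ++ map Some M ++ v ->
  exists u0 v0, [/\ u = map Some u0, v = map Some v0 & W = u0 ++ M ++ v0].
Proof.
move=> E.
exists (take (size u) W), (drop (size u + size M) W).
have hu : u = map Some (take (size u) W) by rewrite map_take E take_size_cat.
have hv : v = map Some (drop (size u + size M) W).
  by rewrite map_drop E addnC -drop_drop drop_size_cat // drop_size_cat // size_map.
split => //.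
apply: (@inj_map _ _ (@Some A)); first by move=> ? ? [].

by rewrite !map_cat -hu -hv -E.
Qed.

Lemma flat_prefix (A : eqType) (r r' : seq A) n : prefix r' r ->
  exists z, flatten (nseq n r) ++ r' = r' ++ z.
Proof.
move=> /prefixP [z0 hz]; case: n => [|n] /=; first by exists [::]; rewrite cats0.
by exists (z0 ++ flatten (nseq n r) ++ r'); rewrite {1}hz -!catA.
Qed.

Theorem fact1 (A : eqType) (tau l : nat) (Sk : seq A) (Q' : seq (option A))
    (S : seq A) :
  1 <= tau -> 10 * tau < l -> l <= size Sk ->
  Qprime_spec tau (Qk tau l Sk) Q' ->
  size S <= size (Qk tau l Sk) + 4 * tau ->
  infix (Qk tau l Sk) S ->
  (forall u v : seq A, S = u ++ Qk tau l Sk ++ v ->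
     map Some u ++ Q' ++ map Some v = rk (Qk tau l Sk) Q' S) /\
  (forall u v : seq (option A), rk (Qk tau l Sk) Q' S = u ++ Q' ++ v ->
     u ++ map Some (Qk tau l Sk) ++ v = map Some S).
Proof.
move=> t1 hl hlS hspec hS hinf.
have sQ : size (Qk tau l Sk) = l - 2 * tau by rewrite /Qk size_drop size_takel.
set Q := Qk tau l Sk in hspec hS hinf sQ *.
have [x0 _] : exists x0 : A, True.
  have : 0 < size Q by lia.
  rewrite /Q; elim: (Qk tau l Sk) => [|c ? _] //; by exists c.
set i0 := infix_index Q S.
set x := take i0 S; set y := drop (i0 + size Q) S.
have dec : S = x ++ Q ++ y.
  move: (hinf); rewrite infixE -/i0 => /eqP hq.
  rewrite -{1}(cat_take_drop i0 S) -{1}(cat_take_drop (size Q) (drop i0 S)) hq.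
  by rewrite drop_drop addnC.
have rkE : rk Q Q' S = map Some x ++ Q' ++ map Some y by rewrite /rk hinf.
rewrite rkE.
have [p0 pQ Pp] := per_prop x0 (X := Q) ltac:(lia).
case: hspec => [[hp ->] | [hp [t [t' [r' [hQ hpre ht hQ' hsz]]]]]].
- have key : forall x y u v : seq A, x ++ Q ++ y = u ++ Q ++ v -> size x <= size u ->
      size (x ++ Q ++ y) <= size Q + 4 * tau -> x = u /\ y = v.
    move=> x1 y1 u1 v1 E h hs.
    have hs' : size (u1 ++ Q ++ v1) <= size Q + 4 * tau by rewrite -E.
    rewrite !size_cat in hs'.
    case: (posnP (size u1 - size x1)) => hd.
      by apply: (occ_eq E); lia.
    have hP := occ_per x0 E h; have : size u1 - size x1 <= size Q by lia.
    move=> hq; have := per_min hd hq hP; lia.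
  have key2 : forall x y u v : seq A, x ++ Q ++ y = u ++ Q ++ v ->
      size (x ++ Q ++ y) <= size Q + 4 * tau -> x = u /\ y = v.
    move=> x1 y1 u1 v1 E hs; case: (leqP (size x1) (size u1)) => h.
      exact: key.
    have hs' : size (u1 ++ Q ++ v1) <= size Q + 4 * tau by rewrite -E.
    by have [-> ->] := key _ _ _ _ (esym E) (ltnW h) hs'.
  split.
  + move=> u v hu; have [-> ->] := key2 _ _ _ _ (etrans (esym hu) dec) ltac:(by rewrite -hu).
    by [].
  + move=> u v E.
    have cu : count_mem None u = 0.
      have := congr1 (count_mem None) E.
      rewrite !count_cat /=.
      have /count_memPn -> := none_notin x.
      have /count_memPn -> := none_notin y.
      lia.
    have [<- <-] := split_none (none_notin x) (introT count_memPn cu) E.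
    by rewrite dec !map_cat.
- set p := per Q in p0 pQ Pp hp hQ hpre hQ' *.
  set rho := take p Q in hQ hpre hQ' *.
  have srho : size rho = p by rewrite size_takel.
  set Q'' := flatten (nseq t' rho) ++ r' in hQ'.
  have sr' : size r' <= p by rewrite -srho size_prefix.
  have sQ'' : 8 * tau <= size Q'' by move: hsz; rewrite hQ' size_map => /andP[].
  have hQQ : exists z, Q = Q'' ++ z.
    have [z hz] := flat_prefix (t - t') hpre.
    exists z; rewrite {1}hQ /Q'' -catA -hz catA -flat_add.
    by congr (flatten (nseq _ _) ++ _); lia.
  have key : forall (X : seq A) a b x1 y1 u1 v1, X = flatten (nseq a rho) ++ r' ->
      (exists z, Q = X ++ z) -> 8 * tau <= size X -> x1 ++ X ++ y1 = u1 ++ X ++ v1 ->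
      size x1 <= size u1 -> size (x1 ++ X ++ y1) <= size X + 4 * tau ->
      x1 ++ (flatten (nseq b rho) ++ r') ++ y1 = u1 ++ (flatten (nseq b rho) ++ r') ++ v1.
    move=> X a b x1 y1 u1 v1 hX [z hz] hsX E h hs.
    have hs' : size (u1 ++ X ++ v1) <= size X + 4 * tau by rewrite -E.
    rewrite !size_cat in hs'.
    case: (posnP (size u1 - size x1)) => hd.
      by have [-> ->] := occ_eq E ltac:(lia).
    have hP := occ_per x0 E h.
    have hdv := per_dvd hz hd ltac:(lia) hP.
    set k := (size u1 - size x1) %/ p.
    have dk : size u1 - size x1 = k * p by rewrite divnK.
    have sX : size X = a * p + size r' by rewrite hX size_cat flat_size srho.
    move: E; rewrite hX; apply: (@swap_le _ rho r' x1 y1 u1 v1 a b k) => //; first by rewrite srho.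
    rewrite -(leq_pmul2r p0); lia.
  split.
  + move=> u v hu; rewrite hQ' -!map_cat; congr map.
    have E0 : u ++ Q ++ v = x ++ Q ++ y := etrans (esym hu) dec.
    have hsz0 : size (u ++ Q ++ v) <= size Q + 4 * tau by rewrite -hu.
    have hQ0 : exists z, Q = Q ++ z by exists [::]; rewrite cats0.
    have sQ8 : 8 * tau <= size Q by lia.
    case: (leqP (size u) (size x)) => h.
      exact: (key Q t t' u v x y hQ hQ0 sQ8 E0 h hsz0).
    have hsz1 : size (x ++ Q ++ y) <= size Q + 4 * tau by rewrite -E0.
    exact: esym (key Q t t' x y u v hQ hQ0 sQ8 (esym E0) (ltnW h) hsz1).
  + move=> u v E; rewrite hQ' -!map_cat in E.
    have [u0 [v0 [hu hv hW]]] := map_cat3 E.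
    rewrite hu hv dec -!map_cat; congr map.
    have hsz0 : size (x ++ Q'' ++ y) <= size Q'' + 4 * tau.
      by move: hS; rewrite dec !size_cat; lia.
    have hsz1 : size (u0 ++ Q'' ++ v0) <= size Q'' + 4 * tau by rewrite -hW.
    case: (leqP (size x) (size u0)) => h.
      have R := key Q'' t' t x y u0 v0 erefl hQQ sQ'' hW h hsz0.
      by rewrite -hQ in R.
    have R := key Q'' t' t u0 v0 x y erefl hQQ sQ'' (esym hW) (ltnW h) hsz1.
    by rewrite -hQ in R.
Qed.
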